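(* Let $A,A^*$ be a Leonard pair in $\mathcal A$. Then there exists a unique antiautomorphism $\dagger$ of $\mathcal A$ such that $A^\dagger=A$ and $A^{*\dagger}=A^*$. Moreover $X^{\dagger\dagger}=X$ for all $X\in\mathcal A$.
   Context: Let $\mathbb K$ be a field, $d\ge0$, and $\mathcal A$ a $\mathbb K$-algebra isomorphic to $\mathrm{Mat}_{d+1}(\mathbb K)$. A Leonard pair in $\mathcal A$ is an ordered pair $A,A^*\in\mathcal A$ ($A^*$ is notation, not an adjoint) that acts on an irreducible (left) $\mathcal A$-module $V$ as follows: (a) some basis of $V$ makes the matrix of $A$ irreducible tridiagonal (tridiagonal with all sub- and superdiagonal entries nonzero) and the matrix of $A^*$ diagonal, and (b) some basis of $V$ makes the matrix of $A^*$ irreducible tridiagonal and that of $A$ diagonal. An antiautomorphism of $\mathcal A$ is a $\mathbb K$-linear bijection $\gamma:\mathcal A\to\mathcal A$ with $(XY)^\gamma=Y^\gamma X^\gamma$ for all $X,Y$. *)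

(* Defs.v *)
From HB Require Import structures.
From mathcomp Require Import all_boot all_order all_algebra.
Set Implicit Arguments. Unset Strict Implicit. Unset Printing Implicit Defensive.
Import GRing.Theory.
Local Open Scope ring_scope.

Definition irr_tridiag (K : fieldType) (n : nat) (M : 'M[K]_n) : Prop :=
  (forall i j : 'I_n, (i.+1 < j)%N \/ (j.+1 < i)%N -> M i j = 0) /\
  (forall i j : 'I_n, (i.+1 == j :> nat) || (j.+1 == i :> nat) -> M i j != 0).

Definition mx_alg_iso (K : fieldType) (A : algType K) (d : nat)
  (rho : A -> 'M[K]_(d.+1)) : Prop :=
  [/\ forall (c : K) (x : A), rho (c *: x) = c *: rho x,
      forall x y : A, rho (x + y) = rho x + rho y,
      forall x y : A, rho (x * y) = rho x *m rho y,
      rho 1 = 1%:M & bijective rho].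

(* An irreducible A-module
   V is (up to isomorphism) K^{d+1} with A acting through an algebra
   isomorphism rho : A -> Mat_{d+1}(K); a basis of V is given by an invertible
   change-of-basis matrix P, in which the matrix of X is P^-1 (rho X) P. *)
Definition leonard_pair (K : fieldType) (A : algType K) (d : nat) (a as_ : A)
  : Prop :=
  exists rho : A -> 'M[K]_(d.+1), mx_alg_iso rho /\
   (exists P : 'M[K]_(d.+1), P \in unitmx /\
      irr_tridiag (invmx P *m rho a *m P) /\ is_diag_mx (invmx P *m rho as_ *m P)) /\
   (exists Q : 'M[K]_(d.+1), Q \in unitmx /\
      irr_tridiag (invmx Q *m rho as_ *m Q) /\ is_diag_mx (invmx Q *m rho a *m Q)).

Definition antiautomorphism (K : fieldType) (A : algType K) (g : A -> A) : Prop :=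
  [/\ forall (c : K) (x : A), g (c *: x) = c *: g x,
      forall x y : A, g (x + y) = g x + g y,
      bijective g &
      forall x y : A, g (x * y) = g y * g x].

(* Main.v *)
Require Import Defs.
From HB Require Import structures.
From mathcomp Require Import all_boot all_order all_algebra.
Set Implicit Arguments. Unset Strict Implicit. Unset Printing Implicit Defensive.
Import GRing.Theory.
Local Open Scope ring_scope.


Lemma ker_tri (K : fieldType) (n : nat) (T : 'M[K]_n.+1) (v : 'cV[K]_n.+1) :
  (forall i j : 'I_n.+1, (i.+1 < j)%N -> T i j = 0) ->
  (forall i j : 'I_n.+1, j = i.+1 :> nat -> T i j != 0) ->
  T *m v = 0 -> v ord0 0 = 0 -> v = 0.
Proof.
move=> Tz Tnz Tv v0.
suff H : forall k (i : 'I_n.+1), (i <= k)%N -> v i 0 = 0.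
  by apply/matrixP=> i j; rewrite (ord1 j) mxE (H i).
elim=> [|k IH] i.
  by rewrite leqn0 => /eqP i0; rewrite -v0; congr (v _ _); apply: val_inj.
rewrite leq_eqVlt => /orP[/eqP ik|]; last by rewrite ltnS; apply: IH.
have kn : (k < n.+1)%N by rewrite -ltnS -ik ltnS ltnW.
pose i' := Ordinal kn.
have := congr1 (fun X : 'cV[K]_n.+1 => X i' 0) Tv; rewrite !mxE (bigD1 i) //= big1.
  by rewrite addr0 => /eqP; rewrite mulf_eq0 (negPf (Tnz i' _ ik)) /= => /eqP.
move=> j ji; case: (ltngtP j k) => [jk|kj|jk].
- by rewrite IH ?mulr0 // ltnW.
- have : (k.+1 <= j)%N by [].
  rewrite leq_eqVlt => /orP[/eqP kj'|kj'].
    by case/eqP: ji; apply: val_inj; rewrite /= -kj' ik.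
  by rewrite Tz ?mul0r.
- by rewrite IH ?mulr0 // jk.
Qed.

Lemma mul_delta_col (K : fieldType) (n : nat) (X : 'M[K]_n.+1) (i : 'I_n.+1) k :
  (X *m delta_mx i (0 : 'I_1)) k 0 = X k i.
Proof.
rewrite mxE (bigD1 i) //= big1 => [|j ji]; first by rewrite !mxE !eqxx mulr1 addr0.
by rewrite !mxE (negPf ji) mulr0.
Qed.

Lemma distinct_diag (K : fieldType) (n : nat) (B P Q : 'M[K]_n.+1) :
  P \in unitmx -> Q \in unitmx ->
  is_diag_mx (invmx P *m B *m P) ->
  (forall i j : 'I_n.+1, (i.+1 < j)%N -> (invmx Q *m B *m Q) i j = 0) ->
  (forall i j : 'I_n.+1, j = i.+1 :> nat -> (invmx Q *m B *m Q) i j != 0) ->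
  forall i j : 'I_n.+1, (invmx P *m B *m P) i i = (invmx P *m B *m P) j j -> i = j.
Proof.
move=> Pu Qu /is_diag_mxP Dd Tz Tnz i j Dij.
set D := invmx P *m B *m P in Dd Dij.
set T := invmx Q *m B *m Q in Tz Tnz.
apply/eqP/negPn/negP => ij.
set c := D i i.
have Tc : forall k l, (T - c%:M) k l = T k l - c *+ (k == l) by move=> k l; rewrite !mxE.
have Tcz : forall k l : 'I_n.+1, (k.+1 < l)%N -> (T - c%:M) k l = 0.
  move=> k l kl; rewrite Tc Tz // ; case: (eqVneq k l) => [kl'|kl']; last by rewrite mulr0n subr0.
  by move: kl; rewrite kl' ltnNge ltnW.
have Tcnz : forall k l : 'I_n.+1, l = k.+1 :> nat -> (T - c%:M) k l != 0.
  move=> k l kl; rewrite Tc; case: (eqVneq k l) => [kl'|kl']; last by rewrite mulr0n subr0 Tnz.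
  by move: kl; rewrite kl' => /eqP; rewrite eqn_leq ltnn andbF.
set N := invmx Q *m P.
set Ni := invmx P *m Q.
have NK : forall v : 'cV[K]_n.+1, Ni *m (N *m v) = v.
  by move=> v; rewrite /Ni /N !mulmxA (mulmxK Qu) mulVmx // mul1mx.
have HT : T - c%:M = N *m (D - c%:M) *m Ni.
  rewrite /N /Ni /D /T mulmxBr mulmxBl !mulmxA !(mulmxK Pu); congr (_ - _).
  by rewrite mul_mx_scalar -!scalemxAl (mulmxK Pu) mulVmx // scalemx1.
have key : forall l : 'I_n.+1, D l l = c -> (T - c%:M) *m (N *m delta_mx l (0 : 'I_1)) = 0.
  move=> l Dl; rewrite HT -mulmxA NK -mulmxA.
  suff -> : (D - c%:M) *m delta_mx l (0 : 'I_1) = 0 by rewrite mulmx0.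
  apply/matrixP=> k z; rewrite (ord1 z) mul_delta_col.
  have -> : (D - c%:M) k l = D k l - c *+ (k == l) by rewrite !mxE.
  rewrite [RHS]mxE; case: (eqVneq k l) => [->|kl].
    by rewrite Dl mulr1n subrr.
  by rewrite Dd // mulr0n subrr.
set u := N *m delta_mx i (0 : 'I_1).
set w := N *m delta_mx j (0 : 'I_1).
have ku : (T - c%:M) *m u = 0 := key i erefl.
have kw : (T - c%:M) *m w = 0 := key j (esym Dij).
have H1 : (T - c%:M) *m (w ord0 0 *: u - u ord0 0 *: w) = 0.
  by rewrite mulmxBr -!scalemxAr ku kw !scaler0 subrr.
have H2 : (w ord0 0 *: u - u ord0 0 *: w) ord0 0 = 0.
  by rewrite !mxE mulrC subrr.
have z0 := ker_tri Tcz Tcnz H1 H2.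
have : N *m (w ord0 0 *: delta_mx i (0 : 'I_1) - u ord0 0 *: delta_mx j (0 : 'I_1)) = 0.
  by rewrite mulmxBr -!scalemxAr; exact: z0.
move=> /(congr1 (mulmx Ni)); rewrite NK mulmx0 => E.
have w0 : w ord0 0 = 0.
  by have := congr1 (fun X : 'cV[K]_n.+1 => X i 0) E; rewrite !mxE !eqxx (negPf ij) /= mulr1 mulr0 subr0.
have u0 : u ord0 0 = 0.
  have := congr1 (fun X : 'cV[K]_n.+1 => X j 0) E; rewrite !mxE !eqxx eq_sym (negPf ij) /= mulr1 mulr0 sub0r.
  by move/eqP; rewrite oppr_eq0 => /eqP.
have u00 := ker_tri Tcz Tcnz ku u0.
have : Ni *m u = 0 by rewrite u00 mulmx0.
rewrite NK => /(congr1 (fun X : 'cV[K]_n.+1 => X i 0)); rewrite !mxE !eqxx /=.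
by move/eqP; rewrite oner_eq0.
Qed.

Lemma prod_diag (K : fieldType) (n : nat) (I : Type) (r : seq I) (Pr : pred I) (F : I -> 'rV[K]_n.+1) :
  \prod_(j <- r | Pr j) (diag_mx (F j) : 'M[K]_n.+1) = diag_mx (\row_k \prod_(j <- r | Pr j) F j 0 k).
Proof.
elim: r => [|x r IH].
  rewrite big_nil -[1 : 'M[K]_n.+1]/(1%:M) -diag_const_mx; congr diag_mx.
  by apply/rowP=> k; rewrite !mxE big_nil.
rewrite big_cons; case: ifP => Px; rewrite IH; last first.
  by congr diag_mx; apply/rowP=> k; rewrite !mxE big_cons Px.
rewrite -mulmxE mulmx_diag; congr diag_mx; apply/rowP=> k; rewrite !mxE big_cons Px.
by [].
Qed.

Lemma delta_mul_l (K : fieldType) (n : nat) (A : 'M[K]_n.+1) i k l : (delta_mx i i *m A) k l = A i l *+ (k == i).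
Proof.
rewrite mxE (bigD1 i) //= big1 => [|j ji]; last by rewrite mxE (negPf ji) andbF mul0r.
rewrite addr0 mxE eqxx andbT; case: (k == i); by rewrite ?mul1r ?mul0r.
Qed.

Lemma delta_mul_r (K : fieldType) (n : nat) (A : 'M[K]_n.+1) j k l : (A *m delta_mx j j) k l = A k j *+ (l == j).
Proof.
rewrite mxE (bigD1 j) //= big1 => [|m mj]; last by rewrite mxE (negPf mj) /= mulr0.
by rewrite addr0 mxE eqxx /= mulr_natr.
Qed.

Lemma delta_sandwich (K : fieldType) (n : nat) (A : 'M[K]_n.+1) i j : delta_mx i i *m A *m delta_mx j j = A i j *: delta_mx i j.
Proof.
apply/matrixP=> k l; rewrite delta_mul_r delta_mul_l !mxE.
by case: (k == i); case: (l == j); rewrite /= ?mulr1 ?mulr0 ?mulr0n ?mulr1n ?mul0rn.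
Qed.

Lemma fix_all (K : fieldType) (n : nat) (tau : 'M[K]_n.+1 -> 'M[K]_n.+1) (T D : 'M[K]_n.+1) :
  (forall (c : K) X, tau (c *: X) = c *: tau X) ->
  (forall X Y, tau (X + Y) = tau X + tau Y) ->
  (forall X Y, tau (X *m Y) = tau X *m tau Y) ->
  tau 1%:M = 1%:M -> tau T = T -> tau D = D ->
  is_diag_mx D -> (forall i j : 'I_n.+1, D i i = D j j -> i = j) ->
  (forall i j : 'I_n.+1, j = i.+1 :> nat -> T i j != 0 /\ T j i != 0) ->
  forall X, tau X = X.
Proof.
move=> tZ tD tM t1 tT tDD /is_diag_mxP Dd Ddist Tnz.
have f0 : tau 0 = 0 by rewrite -(scale0r 0) tZ !scale0r.
have fD : forall X Y, tau X = X -> tau Y = Y -> tau (X + Y) = X + Y.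
  by move=> X Y hX hY; rewrite tD hX hY.
have fZ : forall c X, tau X = X -> tau (c *: X) = c *: X by move=> c X hX; rewrite tZ hX.
have fM : forall X Y, tau X = X -> tau Y = Y -> tau (X *m Y) = X *m Y.
  by move=> X Y hX hY; rewrite tM hX hY.
have fS : forall c, tau c%:M = c%:M by move=> c; rewrite -scalemx1 fZ.
pose E i := \prod_(j | j != i) ((D i i - D j j)^-1 *: (D - (D j j)%:M) : 'M[K]_n.+1).
have fE : forall i, tau (E i) = E i.
  move=> i; apply: (big_ind (fun X => tau X = X)).
  - exact: t1.
  - by move=> X Y hX hY; rewrite -mulmxE fM.
  move=> j _; apply: (fZ); rewrite -[D - _]/(D + (- (D j j)%:M)) fD //.
  by rewrite -scaleN1r fZ // fS.
have EE : forall i, E i = delta_mx i i.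
  move=> i; rewrite /E.
  have -> : \prod_(j | j != i) ((D i i - D j j)^-1 *: (D - (D j j)%:M) : 'M[K]_n.+1) =
            \prod_(j | j != i) (diag_mx (\row_k ((D i i - D j j)^-1 * (D k k - D j j))) : 'M[K]_n.+1).
    apply: eq_bigr => j _; apply/matrixP=> k l; rewrite !mxE.
    case: (eqVneq k l) => [->|kl]; first by rewrite !mulr1n.
    by rewrite Dd // !mulr0n subrr mulr0.
  rewrite prod_diag; apply/matrixP=> k l; rewrite !mxE.
  under eq_bigr do rewrite mxE.
  case: (eqVneq k i) => [->|ki].
    rewrite big1 => [|j ji]; last first.
      rewrite mulVf // subr_eq0; apply/eqP => /Ddist ij.
      by rewrite ij eqxx in ji.
    by rewrite eq_sym.
  by rewrite (bigD1 k) //= subrr mulr0 mul0r mul0rn.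
have fadj : forall i j : 'I_n.+1, j = i.+1 :> nat ->
    tau (delta_mx i j) = delta_mx i j /\ tau (delta_mx j i) = delta_mx j i.
  move=> i j ij; have [h1 h2] := Tnz i j ij; split.
  - have -> : delta_mx i j = (T i j)^-1 *: (E i *m T *m E j).
      by rewrite !EE delta_sandwich scalerA mulVf // scale1r.
    by apply: (fZ); rewrite !fM ?fE.
  - have -> : delta_mx j i = (T j i)^-1 *: (E j *m T *m E i).
      by rewrite !EE delta_sandwich scalerA mulVf // scale1r.
    by apply: (fZ); rewrite !fM ?fE.
have fdist : forall k (i j : 'I_n.+1), j = (i + k)%N :> nat ->
    tau (delta_mx i j) = delta_mx i j /\ tau (delta_mx j i) = delta_mx j i.
  elim=> [|k IH] i j ij.
    have -> : j = i by apply: val_inj; rewrite /= ij addn0.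
    by rewrite -EE fE.
  have mn : (i + k < n.+1)%N by have := ltn_ord j; rewrite ij addnS => /ltnW.
  pose m := Ordinal mn.
  have [a1 a2] := IH i m erefl.
  have [b1 b2] : tau (delta_mx m j) = delta_mx m j /\ tau (delta_mx j m) = delta_mx j m.
    by apply: fadj; rewrite ij addnS.
  split.
    by rewrite -(mul_delta_mx m) fM.
  by rewrite -(mul_delta_mx m) fM.
move=> X; rewrite (matrix_sum_delta X).
apply: (big_ind (fun X => tau X = X)); [exact: f0| by move=> ? ? h1 h2; apply: fD h1 h2|].
move=> i _; apply: (big_ind (fun X => tau X = X)); [exact: f0| by move=> ? ? h1 h2; apply: fD h1 h2|].
move=> j _; apply: (fZ).
case: (leqP i j) => ij.
  by have [] := fdist (j - i)%N i j (esym (subnKC ij)).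
by have [] := fdist (i - j)%N j i (esym (subnKC (ltnW ij))).
Qed.

Lemma diag_comm (K : fieldType) (n : nat) (s : 'rV[K]_n.+1) (T : 'M[K]_n.+1) :
  (forall i j, s 0 i * T j i = T i j * s 0 j) -> diag_mx s *m T^T = T *m diag_mx s.
Proof.
by move=> h; rewrite mul_diag_mx mul_mx_diag; apply/matrixP=> i j; rewrite !mxE h.
Qed.

Lemma conj_sym (K : fieldType) (n : nat) (P S T B : 'M[K]_n.+1) : P \in unitmx -> S *m T^T = T *m S ->
  invmx P *m B *m P = T ->
  (P *m S *m P^T) *m B^T = B *m (P *m S *m P^T).
Proof.
move=> Pu h hB.
have -> : B = P *m T *m invmx P by rewrite -hB !mulmxA mulmxV // mul1mx mulmxK.
rewrite !trmx_mul trmx_inv -!mulmxA; congr (P *m _).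
rewrite mulKVmx ?unitmx_tr // mulKmx // !mulmxA h //.
Qed.

Lemma sym_exists (K : fieldType) (n : nat) (B Bs P : 'M[K]_n.+1) : P \in unitmx ->
  (forall i j : 'I_n.+1, (i.+1 < j)%N \/ (j.+1 < i)%N -> (invmx P *m B *m P) i j = 0) ->
  (forall i j : 'I_n.+1, j = i.+1 :> nat -> (invmx P *m B *m P) i j != 0 /\ (invmx P *m B *m P) j i != 0) ->
  is_diag_mx (invmx P *m Bs *m P) ->
  exists N : 'M[K]_n.+1, [/\ N \in unitmx, N^T = N, N *m B^T = B *m N & N *m Bs^T = Bs *m N].
Proof.
move=> Pu.
set T := invmx P *m B *m P; set D := invmx P *m Bs *m P => Tz Tnz /is_diag_mxP Dd.
pose t a b := T (inord a) (inord b).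
pose f := fix f k := if k is k'.+1 then f k' * t k'.+1 k' / t k' k'.+1 else 1.
have tnz : forall k, (k.+1 < n.+1)%N -> t k.+1 k != 0 /\ t k k.+1 != 0.
  move=> k kn; have kn' : (k < n.+1)%N by apply: ltnW.
  have := Tnz (inord k) (inord k.+1); rewrite !inordK //.
  by case=> // h1 h2; split.
have fnz : forall k, (k < n.+1)%N -> f k != 0.
  elim=> [|k IH] kn /=; first exact: oner_neq0.
  have [h1 h2] := tnz k kn.
  by rewrite !mulf_neq0 ?invr_eq0 // IH // ltnW.
pose s := \row_(i < n.+1) f i.
have ST : forall i j, s 0 i * T j i = T i j * s 0 j.
  move=> i j; rewrite [s 0 i]mxE [s 0 j]mxE.
  case: (ltngtP i j) => [ij|ji|ij]; last by rewrite (val_inj ij) mulrC.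
  - rewrite leq_eqVlt in ij; case/orP: ij => [/eqP ij|ij]; last by rewrite !Tz ?mul0r ?mulr0 //; by [left|right].
    have [h1 h2] := Tnz i j (esym ij).
    have -> : f j = f i * T j i / T i j.
      have fj : f j = f i.+1 by move: ij => /eqP; rewrite eq_sym => /eqP ->.
      rewrite fj /= /t; congr (_ * _ * _); [congr (T _ _) | congr (GRing.inv (T _ _))]; apply: val_inj; rewrite /= ?inordK // ?ij // ltnW // -ij ltn_ord.
    by rewrite [RHS]mulrC -!mulrA mulVf // mulr1.
  - rewrite leq_eqVlt in ji; case/orP: ji => [/eqP ji|ji]; last by rewrite !Tz ?mul0r ?mulr0 //; by [left|right].
    have [h1 h2] := Tnz j i (esym ji).
    have -> : f i = f j * T i j / T j i.
      have fi : f i = f j.+1 by move: ji => /eqP; rewrite eq_sym => /eqP ->.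
      rewrite fi /= /t; congr (_ * _ * _); [congr (T _ _) | congr (GRing.inv (T _ _))]; apply: val_inj; rewrite /= ?inordK // ?ji // ltnW // -ji ltn_ord.
    by rewrite -!mulrA mulVf ?mulr1 // mulrC.
have Su : diag_mx s \in unitmx.
  rewrite unitmxE det_diag unitfE; apply/prodf_neq0 => i _; rewrite mxE; exact: fnz.
exists (P *m diag_mx s *m P^T); split.
- by rewrite !unitmx_mul Pu Su unitmx_tr Pu.
- by rewrite !trmx_mul trmxK tr_diag_mx mulmxA.
- by apply: conj_sym => //; apply: diag_comm.
- apply: conj_sym => //; apply: diag_comm.
  move=> i j; case: (eqVneq i j) => [->|ij]; first by rewrite mulrC.
  have ji : j != i by rewrite eq_sym.
  by rewrite (Dd _ _ ij) (Dd _ _ ji) mulr0 mul0r.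
Qed.
Lemma conj_mul (K : fieldType) (n : nat) (U A B : 'M[K]_n.+1) : U \in unitmx ->
  invmx U *m (A *m B) *m U = (invmx U *m A *m U) *m (invmx U *m B *m U).
Proof. by move=> Uu; rewrite !mulmxA mulmxK. Qed.

Lemma conjK (K : fieldType) (n : nat) (U B : 'M[K]_n.+1) : U \in unitmx ->
  U *m (invmx U *m B *m U) *m invmx U = B.
Proof. by move=> Uu; rewrite !mulmxA mulmxV // mul1mx mulmxK. Qed.

Lemma conjK' (K : fieldType) (n : nat) (U B : 'M[K]_n.+1) : U \in unitmx ->
  invmx U *m (U *m B *m invmx U) *m U = B.
Proof. by move=> Uu; rewrite !mulmxA mulVmx // mul1mx mulmxKV. Qed.

Theorem theorem6p1 (K : fieldType) (d : nat) (A : algType K)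
  (Hiso : exists rho : A -> 'M[K]_(d.+1), mx_alg_iso rho)
  (a as_ : A) (HLP : leonard_pair d a as_) :
  exists g : A -> A,
    (antiautomorphism g /\ g a = a /\ g as_ = as_ /\ (forall X : A, g (g X) = X)) /\
    (forall h : A -> A, antiautomorphism h -> h a = a -> h as_ = as_ -> h =1 g).
Proof.
case: HLP => rho [[rZ rD rM r1 [rinv rK rKV]]
  [[P [Pu [[Tz Tnz] Dd]]] [Q [Qu [[Tsz Tsnz] _]]]]].
have rI := can_inj rK.
have iZ : forall c Y, rinv (c *: Y) = c *: rinv Y.
  by move=> c Y; apply: rI; rewrite rZ !rKV.
have iD : forall X Y, rinv (X + Y) = rinv X + rinv Y.
  by move=> X Y; apply: rI; rewrite rD !rKV.
have iM : forall X Y, rinv (X *m Y) = rinv X * rinv Y.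
  by move=> X Y; apply: rI; rewrite rM !rKV.
have i1 : rinv 1%:M = 1 by apply: rI; rewrite r1 rKV.
have Tnz2 : forall i j : 'I_d.+1, j = i.+1 :> nat ->
    (invmx P *m rho a *m P) i j != 0 /\ (invmx P *m rho a *m P) j i != 0.
  by move=> i j ij; split; apply: Tnz; rewrite ij eqxx ?orbT.
have [N [Nu NT NB NBs]] := sym_exists Pu Tz Tnz2 Dd.
pose phi (Y : 'M[K]_d.+1) := N *m Y^T *m invmx N.
have phZ : forall c Y, phi (c *: Y) = c *: phi Y.
  move=> c Y; rewrite /phi; have -> : (c *: Y)^T = c *: Y^T by apply/matrixP=> i j; rewrite !mxE.
  by rewrite -scalemxAr -scalemxAl.
have phD : forall X Y, phi (X + Y) = phi X + phi Y.
  move=> X Y; rewrite /phi; have -> : (X + Y)^T = X^T + Y^T by apply/matrixP=> i j; rewrite !mxE.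
  by rewrite mulmxDr mulmxDl.
have phM : forall X Y, phi (X *m Y) = phi Y *m phi X.
  by move=> X Y; rewrite /phi trmx_mul !mulmxA mulmxKV.
have phK : forall Y, phi (phi Y) = Y.
  move=> Y; rewrite /phi !trmx_mul trmxK trmx_inv NT !mulmxA mulmxV // mul1mx.
  by rewrite mulmxK.
have phB : forall B, N *m B^T = B *m N -> phi B = B.
  by move=> B h; rewrite /phi h mulmxK.
pose g x := rinv (phi (rho x)).
have gg : forall x, g (g x) = x by move=> x; rewrite /g rKV phK rK.
have ganti : antiautomorphism g.
  split.
  - by move=> c x; rewrite /g rZ phZ iZ.
  - by move=> x y; rewrite /g rD phD iD.
  - by exists g.
  - by move=> x y; rewrite /g rM phM iM.
exists g; split.
  split=> //; split; first by rewrite /g phB // rK.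
  by split=> //; rewrite /g phB // rK.
move=> h [hZ hD [hinv hK hKV] hM] ha has x.
pose sg x := h (g x).
have sZ : forall c x, sg (c *: x) = c *: sg x.
  by move=> c y; rewrite /sg; case: ganti => gZ _ _ _; rewrite gZ hZ.
have sD : forall x y, sg (x + y) = sg x + sg y.
  by move=> y z; rewrite /sg; case: ganti => _ gD _ _; rewrite gD hD.
have sM : forall x y, sg (x * y) = sg x * sg y.
  by move=> y z; rewrite /sg; case: ganti => _ _ _ gM; rewrite gM hM.
have s1 : sg 1 = 1.
  have e : sg (g (hinv 1)) = 1 by rewrite /sg gg hKV.
  by rewrite -{2}e -[in RHS](mul1r (g (hinv 1))) sM e mulr1.
have sa : sg a = a by rewrite /sg /g phB // rK.
have sas : sg as_ = as_ by rewrite /sg /g phB // rK.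
pose tau (Y : 'M[K]_d.+1) := invmx P *m rho (sg (rinv (P *m Y *m invmx P))) *m P.
have Pu' : invmx P \in unitmx by rewrite unitmx_inv.
have tfix : forall Y, tau Y = Y.
  apply: (fix_all (T := invmx P *m rho a *m P) (D := invmx P *m rho as_ *m P)).
  - move=> c Y; rewrite /tau -scalemxAr -scalemxAl iZ sZ rZ.
    by rewrite -scalemxAr -scalemxAl.
  - move=> X Y; rewrite /tau mulmxDr mulmxDl iD sD rD.
    by rewrite mulmxDr mulmxDl.
  - move=> X Y; rewrite /tau.
    have -> : P *m (X *m Y) *m invmx P = (P *m X *m invmx P) *m (P *m Y *m invmx P).
      by have := conj_mul X Y Pu'; rewrite invmxK.
    by rewrite iM sM rM conj_mul.
  - by rewrite /tau mulmx1 mulmxV // i1 s1 r1 mulmx1 mulVmx.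
  - by rewrite /tau conjK // rK sa.
  - by rewrite /tau conjK // rK sas.
  - exact: Dd.
  - apply: (distinct_diag Pu Qu Dd).
      by move=> i j ij; apply: Tsz; left.
    by move=> i j ij; apply: Tsnz; rewrite ij eqxx.
  - exact: Tnz2.
have sx : forall y, sg y = y.
  move=> y; have := tfix (invmx P *m rho y *m P).
  rewrite /tau conjK // rK => /(congr1 (fun Z => P *m Z *m invmx P)).
  by rewrite !conjK // => /rI.
by rewrite -{1}(gg x) -/(sg (g x)) sx.
Qed.
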